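(* Let $n\geq1$ and let $G$ be any of the game-graphs $G_n(\mathbb T\ltimes\mathbb N^2)$, $G'_n(\mathbb T\rtimes\mathbb N^2)$, $G_n(\mathbb N^2\ltimes\mathbb N^2)$, $G'_n(\mathbb N^2\rtimes\mathbb N^2)$. Let $x:\partial G\to\{0,1\}$ assign a winner to each possible outcome ($0$ = Alice wins, $1$ = Bob wins). If Alice has a winning strategy given $x$, then a Toom cycle is present in $(G,x)$.
   Context: **Decision graphs.** - $\mathbb T$ is the set of finite words over $\{1,2\}$ with root $\varnothing$, edges $\mathbf i\to\mathbf ik$ ($k\in\{1,2\}$), and $|\mathbf i|$ = length. - $\mathbb N^2$ has root $(0,0)$ and edges $(i,j)\to(i,j)1:=(i+1,j)$ and $(i,j)\to(i,j)2:=(i,j+1)$, with $|(i,j)|=i+j$. **Products.** For $D^1,D^2\in\{\mathbb T,\mathbb N^2\}$: - $D^1\ltimes D^2$ has as vertices the pairs $(a,b)$ with $|a|=|b|$ (level $2|b|$) or $|a|=|b|+1$ (level $2|b|+1$), root $(0,0)$, edges $(a,b)\to(ak,b)$ from even levels and $(a,b)\to(a,bk)$ from odd levels. - $D^1\rtimes D^2$ has as vertices the pairs $(a,b)$ with $|a|=|b|$ (level $2|a|$) or $|b|=|a|+1$ (level $2|a|+1$), with edges $(a,b)\to(a,bk)$ from even levels and $(a,b)\to(ak,b)$ from odd levels. **Game-graphs.** $G_n(D)$ (resp. $G'_n(D)$) is the restriction to levels $\leq n$, with root $0$ and possible outcomes $\partial G$ = level $n$. Interior vertices at even levels are Alice's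 turn (resp. Bob's turn) and those at odd levels are Bob's (resp. Alice's). In all four cases Alice's moves change $a$ and Bob's change $b$. Alice has a winning strategy given $x$ if she has a strategy (choice of out-neighbour at each of her vertices) such that whatever Bob plays the outcome $v$ has $x(v)=0$. **Edge classes.** Let $\mathring G$ be the non-outcome vertices. Let $\vec A$ be the set of edges $((a,b),(ak,b))$ from Alice-turn vertices, and $\vec B_k$ the set of edges $((a,b),(a,bk))$ from Bob-turn vertices. **Walks and step types.** A walk is $\psi=\psi_0\cdots\psi_l$ with each $(\psi_{k-1},\psi_k)$ an edge or a reversed edge. The $k$-th step is: - su if $(\psi_{k-1},\psi_k)\in\vec A$, and sd if $(\psi_k,\psi_{k-1})\in\vec A$; - lu if $(\psi_{k-1},\psi_k)\in\vec B_2$, and ld if $(\psi_k,\psi_{k-1})\in\vec B_1$; - ru if $(\psi_{k-1},\psi_k)\in\vec B_1$, and rd if $(\psi_k,\psi_{k-1})\in\vec B_2$. Types su, lu, ru are ''up'' and sd, ld, rd are ''down''. Let - $N_\uparrow=\{0\}\cup\{0<k<l:$ steps $k,k+1$ both up$\}$, - $N_\circ=\{0<k<l:$ step $k$ down, step $k+1$ up$\}$, - $N_\downarrow=\{l\}\cup\{0<k<l:$ steps $k,k+1$ both down$\}$, - $N_\ast=\{0<k<l:$ step $k$ up, step $k+1$ down$\}$. **Toom cycle.** A Toom cycle is a walk with $l\geq2$ satisfying all of the following. - $\psi_0=\psi_l=0$; the first step is su or ru; the last step is sd or rd. - For $0<k<l$ with $\psi_k\in\mathring G$, the only allowed (step $k$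 $\to$ step $k+1$) combinations are su$\to$ru, ru$\to$su, lu$\to$su, sd$\to$rd or ld, rd$\to$sd, ld$\to$lu. - For $\psi_k\in\partial G$, the only allowed combinations are su$\to$sd, ru$\to$rd or ld, lu$\to$rd or ld. - (i) $\psi_k\neq\psi_m$ for distinct $k,m\in N_\ast$. - (ii) If $\psi_k=\psi_m$ with $k\in N_s$, $m\in N_t$, $s,t\in\{\uparrow,\circ,\downarrow\}$ and $s\leq t$ in the order $\uparrow<\circ<\downarrow$, then $k\leq m$. **Presence.** A Toom cycle is present in $(G,x)$ if $x(\psi_k)=0$ for all $k$ with $\psi_k\in\partial G$. *)

(* Defs.v *)
From mathcomp Require Import all_boot.
Set Implicit Arguments. Unset Strict Implicit. Unset Printing Implicit Defensive.

Inductive dir := One | Two.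

Record dgraph := DGraph {
  dvert :> Type;
  droot : dvert;
  dlen : dvert -> nat;
  dchild : dvert -> dir -> dvert }.

Definition Tree : dgraph := @DGraph (seq dir) [::] size (fun a k => rcons a k).

Definition N2 : dgraph :=
  @DGraph (nat * nat)%type (0, 0) (fun p => p.1 + p.2)
    (fun p k => match k with One => (p.1.+1, p.2) | Two => (p.1, p.2.+1) end).

Inductive prodkind := Ltimes | Rtimes.

Record gspec := GSpec {
  g1 : dgraph; g2 : dgraph; gpk : prodkind; gprimed : bool; gn : nat }.

Definition game_G (n : nat) (D1 D2 : dgraph) (pk : prodkind) := GSpec D1 D2 pk false n.
Definition game_G' (n : nat) (D1 D2 : dgraph) (pk : prodkind) := GSpec D1 D2 pk true n.

Section Game.
Variable G : gspec.

Definition gvert := (dvert (g1 G) * dvert (g2 G))%type.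

Definition groot : gvert := (droot (g1 G), droot (g2 G)).

Definition level (v : gvert) : nat := dlen v.1 + dlen v.2.

Definition in_prod (v : gvert) : Prop :=
  match gpk G with
  | Ltimes => dlen v.1 = dlen v.2 \/ dlen v.1 = (dlen v.2).+1
  | Rtimes => dlen v.1 = dlen v.2 \/ dlen v.2 = (dlen v.1).+1
  end.

Definition prod_edge (u v : gvert) : Prop :=
  in_prod u /\ in_prod v /\
  match gpk G with
  | Ltimes => (~~ odd (level u) /\ exists k, v = (dchild u.1 k, u.2))
              \/ (odd (level u) /\ exists k, v = (u.1, dchild u.2 k))
  | Rtimes => (~~ odd (level u) /\ exists k, v = (u.1, dchild u.2 k))
              \/ (odd (level u) /\ exists k, v = (dchild u.1 k, u.2))
  end.

Definition inG (v : gvert) : Prop := in_prod v /\ level v <= gn G.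
Definition edgeG (u v : gvert) : Prop := inG u /\ inG v /\ prod_edge u v.
Definition outcome (v : gvert) : Prop := inG v /\ level v = gn G.
Definition interior (v : gvert) : Prop := inG v /\ level v < gn G.

Definition alice_turn (v : gvert) : Prop := interior v /\ odd (level v) = gprimed G.
Definition bob_turn (v : gvert) : Prop := interior v /\ odd (level v) <> gprimed G.

Definition edgeA (u v : gvert) : Prop :=
  edgeG u v /\ alice_turn u /\ exists k, v = (dchild u.1 k, u.2).
Definition edgeB (k : dir) (u v : gvert) : Prop :=
  edgeG u v /\ bob_turn u /\ v = (u.1, dchild u.2 k).

(** Strategies for Alice and winning. x v = false means Alice wins (x = 0),
    x v = true means Bob wins (x = 1). *)
Definition alice_strategy (sigma : gvert -> gvert) : Prop :=
  forall u, alice_turn u -> edgeG u (sigma u).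

Inductive reach (sigma : gvert -> gvert) : gvert -> Prop :=
  | reach_root : reach sigma groot
  | reach_alice u : reach sigma u -> alice_turn u -> reach sigma (sigma u)
  | reach_bob u v : reach sigma u -> bob_turn u -> edgeG u v -> reach sigma v.

Definition alice_wins (x : gvert -> bool) : Prop :=
  exists sigma, alice_strategy sigma /\
    forall v, reach sigma v -> outcome v -> x v = false.

Inductive stype := su | sd | lu | ld | ru | rd.

Definition is_up (t : stype) : bool :=
  match t with su | lu | ru => true | _ => false end.

Definition step_of (u v : gvert) (t : stype) : Prop :=
  match t with
  | su => edgeA u v
  | sd => edgeA v u
  | lu => edgeB Two u v
  | ld => edgeB One v u
  | ru => edgeB One u v
  | rd => edgeB Two v u
  end.

Definition allowed_int (t1 t2 : stype) : bool :=
  match t1, t2 with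
  | su, ru | ru, su | lu, su | sd, rd | sd, ld | rd, sd | ld, lu => true
  | _, _ => false
  end.

Definition allowed_bd (t1 t2 : stype) : bool :=
  match t1, t2 with
  | su, sd | ru, rd | ru, ld | lu, rd | lu, ld => true
  | _, _ => false
  end.

(** N_up (r = 0), N_circ (r = 1), N_down (r = 2); order up < circ < down. *)
Definition Nclass (tau : nat -> stype) (l r k : nat) : Prop :=
  match r with
  | 0 => k = 0 \/ (0 < k < l /\ is_up (tau k) /\ is_up (tau k.+1))
  | 1 => 0 < k < l /\ ~~ is_up (tau k) /\ is_up (tau k.+1)
  | 2 => k = l \/ (0 < k < l /\ ~~ is_up (tau k) /\ ~~ is_up (tau k.+1))
  | _ => False
  end.

Definition Nast (tau : nat -> stype) (l k : nat) : Prop :=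
  0 < k < l /\ is_up (tau k) /\ ~~ is_up (tau k.+1).

Definition toom_cycle (l : nat) (psi : nat -> gvert) : Prop :=
  2 <= l /\
  (forall k, 0 < k <= l -> edgeG (psi k.-1) (psi k) \/ edgeG (psi k) (psi k.-1)) /\
  exists tau : nat -> stype,
    (forall k, 0 < k <= l -> step_of (psi k.-1) (psi k) (tau k)) /\
    psi 0 = groot /\ psi l = groot /\
    (tau 1 = su \/ tau 1 = ru) /\ (tau l = sd \/ tau l = rd) /\
    (forall k, 0 < k < l -> interior (psi k) -> allowed_int (tau k) (tau k.+1)) /\
    (forall k, 0 < k < l -> outcome (psi k) -> allowed_bd (tau k) (tau k.+1)) /\
    (forall k m, Nast tau l k -> Nast tau l m -> k <> m -> psi k <> psi m) /\
    (forall k m s t, s <= t -> Nclass tau l s k -> Nclass tau l t m ->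
       psi k = psi m -> k <= m).

Definition toom_present (x : gvert -> bool) : Prop :=
  exists l psi, toom_cycle l psi /\
    forall k, k <= l -> outcome (psi k) -> x (psi k) = false.

End Game.

(* Main.v *)
Require Import Defs.
From mathcomp Require Import all_boot zify.
From Stdlib Require Import Lia Classical.
Set Implicit Arguments. Unset Strict Implicit. Unset Printing Implicit Defensive.

Inductive pw {A : Type} (R : A -> A -> Prop) : seq A -> Prop :=
| pw_nil : pw R [::]
| pw_cons a s : (forall b, List.In b s -> R a b) -> pw R s -> pw R (a :: s).

Lemma pw_cat A (R : A -> A -> Prop) s1 s2 :
  pw R s1 -> pw R s2 -> (forall a b, List.In a s1 -> List.In b s2 -> R a b) ->
  pw R (s1 ++ s2).
Proof.
elim: s1 => [|a s1 IH] //= H1 H2 H3; inversion H1; subst.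
constructor.
- move=> b /List.in_app_iff [Hb|Hb]; [by auto|]. by apply: H3; [left|].
- apply: IH => // a' b Ha Hb; apply: H3 => //; by right.
Qed.

Lemma pw_catE A (R : A -> A -> Prop) s1 s2 :
  pw R (s1 ++ s2) -> pw R s1 /\ pw R s2 /\ (forall a b, List.In a s1 -> List.In b s2 -> R a b).
Proof.
elim: s1 => [|a s1 IH] //= H.
- split; [constructor| split => //].
inversion H; subst. have [h1 [h2 h3]] := IH H3.
split; [constructor => // b Hb; apply: H2; apply List.in_app_iff; by left|].
split => // a' b [<-|Ha] Hb; [apply: H2; apply List.in_app_iff; by right| by auto].
Qed.

Lemma In_nth A (s : seq A) d i : i < size s -> List.In (nth d s i) s.
Proof. elim: s i => [|a s IH] [|i] //= H; [by left| right; by apply: IH]. Qed.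

Lemma pw_nth A (R : A -> A -> Prop) s d i j :
  pw R s -> i < j -> j < size s -> R (nth d s i) (nth d s j).
Proof.
elim: s i j => [|a s IH] i j H //=.
inversion H; subst. case: i => [|i]; case: j => [|j] //= Hij Hj.
- apply: H2. by apply: In_nth.
- by apply: IH.
Qed.

Lemma In_filter A (P : pred A) s b : List.In b (filter P s) <-> List.In b s /\ P b.
Proof.
elim: s => [|a s IH] /=; first by split => [|[]].
case Pa: (P a) => /=; split.
- case=> [<-|/IH [H1 H2]]; [by split; [left|]| by split; [right|]].
- case=> [[<-|Hb] Pb]; [by left| right; apply/IH; by split].
- move/IH => [H1 H2]; by split; [right|].
- case=> [[Ha|Hb] Pb]; [by subst; rewrite Pa in Pb| apply/IH; by split].
Qed.

Lemma pw_split A (R : A -> A -> Prop) (P : pred A) s :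
  (forall a b, P a -> ~~ P b -> R a b /\ R b a) ->
  pw R (filter P s) -> pw R (filter (predC P) s) -> pw R s.
Proof.
move=> HX; elim: s => [|a s IH] //= H1 H2.
case Pa: (P a) H1 H2 => /= H1 H2.
- inversion H1; subst; constructor; last by apply: IH.
  move=> b Hb. case Pb: (P b).
  + apply: H3. by apply/In_filter.
  + by case: (HX a b); rewrite ?Pa ?Pb.
- inversion H2; subst; constructor; last by apply: IH.
  move=> b Hb. case Pb: (P b).
  + by case: (HX b a); rewrite ?Pa ?Pb.
  + apply: H3. apply/In_filter; split => //=; by rewrite Pb.
Qed.

Inductive Sub {A : Type} : seq A -> seq A -> Prop :=
| sub_nil : Sub [::] [::]
| sub_skip a s t : Sub s t -> Sub s (a :: t)
| sub_keep a s t : Sub s t -> Sub (a :: s) (a :: t).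

Lemma Sub_In A (s t : seq A) a : Sub s t -> List.In a s -> List.In a t.
Proof. elim=> //= b s' t' _ IH H; [right; by auto| case: H => [->|H]; [by left| right; by auto]]. Qed.

Lemma pw_Sub A (R : A -> A -> Prop) s t : Sub s t -> pw R t -> pw R s.
Proof.
elim=> // [b s' t' _ IH H| b s' t' HS IH H]; inversion H; subst; first by auto.
constructor; last by auto. move=> c Hc; apply: H2; exact: Sub_In HS Hc.
Qed.

Lemma Sub_refl A (s : seq A) : Sub s s.
Proof. elim: s => [|a s IH]; by constructor. Qed.

Lemma Sub_nil A (t : seq A) : Sub [::] t.
Proof. elim: t => [|a t IH]; by constructor. Qed.

Lemma Sub_filter A (P : pred A) s t : Sub s t -> Sub (filter P s) (filter P t).
Proof. elim=> //= [|b s' t' _ IH|b s' t' _ IH]; [constructor| |]; case: (P b) => //; by constructor. Qed.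

Lemma Sub_trans A (s t u : seq A) : Sub s t -> Sub t u -> Sub s u.
Proof.
move=> H1 H2; elim: H2 s H1 => [|b t' u' _ IH|b t' u' _ IH] s H1.
- inversion H1; constructor.
- constructor; by auto.
- inversion H1; subst; [constructor|]; by [auto| constructor; auto].
Qed.

Lemma Sub_catl A (s t u : seq A) : Sub s t -> Sub s (u ++ t).
Proof. move=> H; elim: u => [|a u IH] //=; by constructor. Qed.

Lemma Sub_cat A (s1 s2 t1 t2 : seq A) : Sub s1 t1 -> Sub s2 t2 -> Sub (s1 ++ s2) (t1 ++ t2).
Proof. move=> H; elim: H => //= [b s t _ IH|b s t _ IH] H2; by constructor; auto. Qed.

Inductive chain {A : Type} (R : A -> A -> Prop) : A -> seq A -> Prop :=
| ch_nil a : chain R a [::]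
| ch_cons a b s : R a b -> chain R b s -> chain R a (b :: s).

Lemma chain_cat A (R : A -> A -> Prop) a s1 s2 :
  chain R a (s1 ++ s2) <-> chain R a s1 /\ chain R (last a s1) s2.
Proof.
elim: s1 a => [|b s1 IH] a /=; first by split => [H|[]]; [split; [constructor|]|].
split.
- move=> H; inversion H; subst. have [h1 h2] := (IH b).1 H4. split => //; by constructor.
- case=> H1 H2; inversion H1; subst. constructor => //. apply/IH; by split.
Qed.

Lemma chain_nth A (R : A -> A -> Prop) a s d i :
  chain R a s -> i < size s -> R (nth d (a :: s) i) (nth d (a :: s) i.+1).
Proof.
elim: s a i => [|b s IH] a i //= H; inversion H; subst.
case: i => [|i] //= Hi. by apply: IH.
Qed.

Lemma chain_prev A (R : A -> A -> Prop) a s b :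
  chain R a s -> List.In b s -> exists c, R c b.
Proof.
elim: s a => [|c s IH] a //= H; inversion H; subst. case=> [<-|Hb]; [by exists a| exact: IH H4 Hb].
Qed.

Lemma chain_next A (R : A -> A -> Prop) a s b :
  chain R a s -> List.In b s -> b <> last a s -> exists c, R b c.
Proof.
elim: s a => [|c s IH] a //= H; inversion H; subst. case=> [<-|Hb].
- case: s H H4 IH => [|d s] //= H H4 IH _. inversion H4; subst. by exists d.
- exact: IH H4 Hb.
Qed.

Lemma chain_ext A (R : A -> A -> Prop) a a' s :
  (forall b, R a b -> R a' b) -> chain R a s -> chain R a' s.
Proof. move=> H C; inversion C; subst; constructor; auto. Qed.

Lemma chain_mono A (R R' : A -> A -> Prop) a s :
  (forall b c, R b c -> R' b c) -> chain R a s -> chain R' a s.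
Proof. move=> H; elim=> [b|b c t H1 _ IH]; constructor; auto. Qed.

Section Main.
Variable D1 : dgraph.
Hypothesis hlen1 : forall a k, @dlen D1 (@dchild D1 a k) = (@dlen D1 a).+1.
Hypothesis hinj1 : forall a a' k, @dchild D1 a k = @dchild D1 a' k -> a = a'.
Hypothesis hroot1 : @dlen D1 (droot D1) = 0.
Variables (pk : prodkind) (pr : bool).
Hypothesis hk : (pk = Ltimes /\ pr = false) \/ (pk = Rtimes /\ pr = true).

Definition G (n : nat) := GSpec D1 N2 pk pr n.
Definition gv := (dvert D1 * (nat * nat))%type.
Definition lev (v : gv) := @dlen D1 v.1 + (v.2.1 + v.2.2).
Definition ca (v : gv) k : gv := (@dchild D1 v.1 k, v.2).
Definition cb (v : gv) k : gv := (v.1, @dchild N2 v.2 k).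
Definition Al (v : gv) := odd (lev v) == pr.
Definition ip (v : gv) : Prop :=
  match pk with
  | Ltimes => @dlen D1 v.1 = v.2.1 + v.2.2 \/ @dlen D1 v.1 = (v.2.1 + v.2.2).+1
  | Rtimes => @dlen D1 v.1 = v.2.1 + v.2.2 \/ v.2.1 + v.2.2 = (@dlen D1 v.1).+1
  end.
Definition root : gv := (droot D1, (0, 0)).

Lemma odd_nn b : odd (b + b) = false.
Proof. by rewrite addnn odd_double. Qed.
Lemma odd_Snn b : odd (b.+1 + b) = true.
Proof. by rewrite addSn /= odd_nn. Qed.
Lemma odd_nSn b : odd (b + b.+1) = true.
Proof. by rewrite addnS /= odd_nn. Qed.

Lemma lev_ca v k : lev (ca v k) = (lev v).+1.
Proof. by rewrite /lev /ca /= hlen1. Qed.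
Lemma lev_cb v k : lev (cb v k) = (lev v).+1.
Proof. rewrite /lev /cb /=; case: k => /=; lia. Qed.
Lemma Al_succ v w : lev w = (lev v).+1 -> Al w = ~~ Al v.
Proof. move=> E; rewrite /Al E /=; by case: (odd (lev v)); case: pr. Qed.

Lemma ip_ca v k : ip v -> Al v -> ip (ca v k).
Proof.
rewrite /ip /Al /lev /ca /= hlen1 => H1 H2.
case: hk H1 H2 => [[-> ->]|[-> ->]] /=; set a := @dlen D1 v.1; set b := v.2.1 + v.2.2.
- case=> E2; rewrite E2; [by right| by rewrite odd_Snn].
- case=> E2; [by rewrite E2 odd_nn| by left].
Qed.

Lemma ip_cb v k : ip v -> ~~ Al v -> ip (cb v k).
Proof.
have E : (@dchild N2 v.2 k).1 + (@dchild N2 v.2 k).2 = (v.2.1 + v.2.2).+1 by case: k => /=; lia.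
rewrite /ip /Al /lev /cb /= E => H1 H2.
case: hk H1 H2 => [[-> ->]|[-> ->]] /=; set a := @dlen D1 v.1; set b := v.2.1 + v.2.2.
- case=> E2; [by rewrite E2 odd_nn| by left].
- case=> E2; [by rewrite E2; right| by rewrite E2 odd_nSn].
Qed.

Lemma ip_root : ip root.
Proof. rewrite /ip /root /= hroot1; case: pk; by left. Qed.

Lemma lev_root : lev root = 0.
Proof. by rewrite /lev /root /= hroot1. Qed.

Definition EA n (u v : gv) : Prop := ip u /\ lev u < n /\ Al u /\ exists k, v = ca u k.
Definition EB n k (u v : gv) : Prop := ip u /\ lev u < n /\ ~~ Al u /\ v = cb u k.

Definition st n (u v : gv) (t : stype) : Prop :=
  match t with
  | su => EA n u v | sd => EA n v u
  | lu => EB n Two u v | ld => EB n One v u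
  | ru => EB n One u v | rd => EB n Two v u
  end.

Lemma inG_iff n (v : gv) : @inG (G n) v <-> ip v /\ lev v <= n.
Proof. by []. Qed.

Lemma prod_edge_iff n (u v : gv) :
  @prod_edge (G n) u v <-> ip u /\ ip v /\
    ((Al u /\ exists k, v = ca u k) \/ (~~ Al u /\ exists k, v = cb u k)).
Proof.
rewrite /prod_edge /=; rewrite -/(lev u) -/(ip u) -/(ip v).
rewrite /Al; case: hk => [[-> ->]|[-> ->]] /=;
  case: (odd (lev u)) => /=; split; (try by intuition); move=> [h1 [h2 [[h3 h4]|[h3 h4]]]] //; by intuition.
Qed.

Lemma edgeG_iff n (u v : gv) :
  @edgeG (G n) u v <-> ip u /\ lev u < n /\
    ((Al u /\ exists k, v = ca u k) \/ (~~ Al u /\ exists k, v = cb u k)).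
Proof.
rewrite /edgeG !inG_iff prod_edge_iff. split.
- move=> [[h1 h2] [[h3 h4] [_ [_ H]]]]; split => //; split => //.
  case: H => [[_ [k E]]|[_ [k E]]]; rewrite E ?lev_ca ?lev_cb in h4; by [].
- move=> [h1 [h2 H]]; have Hl : lev v = (lev u).+1.
    by case: H => [[_ [k ->]]|[_ [k ->]]]; rewrite ?lev_ca ?lev_cb.
  have Hi : ip v by case: H => [[A [k ->]]|[A [k ->]]]; [apply: ip_ca|apply: ip_cb].
  split; [by split; [|apply: ltnW]|]. split; [by split; [|rewrite Hl]|]. by [].
Qed.

Lemma alice_iff n (u : gv) : @alice_turn (G n) u <-> ip u /\ lev u < n /\ Al u.
Proof.
rewrite /alice_turn /interior inG_iff /Al /=. rewrite -/(lev u).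
split; [move=> [[[h1 h2] h3] h4]; by rewrite h4 eqxx| move=> [h1 [h2 /eqP h3]]; split; [split; [split; [exact h1| exact: ltnW h2]| exact h2]| exact h3]].
Qed.

Lemma bob_iff n (u : gv) : @bob_turn (G n) u <-> ip u /\ lev u < n /\ ~~ Al u.
Proof.
rewrite /bob_turn /interior inG_iff /Al /=. rewrite -/(lev u).
split; [move=> [[[h1 h2] h3] h4]; split => //; split => //; by apply/eqP|
  move=> [h1 [h2 /eqP h3]]; split; [split; [split; [exact h1| exact: ltnW h2]| exact h2]| exact h3]].
Qed.

Lemma edgeA_iff n (u v : gv) : @edgeA (G n) u v <-> EA n u v.
Proof.
rewrite /edgeA /EA edgeG_iff alice_iff. split.
- move=> [_ [[h1 [h2 h3]] h4]]; by split.
- move=> [h1 [h2 [h3 h4]]]; split; [split => //; split => //; by left|by []].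
Qed.

Lemma edgeB_iff n k (u v : gv) : @edgeB (G n) k u v <-> EB n k u v.
Proof.
rewrite /edgeB /EB edgeG_iff bob_iff. split.
- move=> [_ [[h1 [h2 h3]] h4]]; by split.
- move=> [h1 [h2 [h3 h4]]]; split; [split => //; split => //; right; split => //; by exists k|by []].
Qed.

Lemma step_iff n (u v : gv) t : @step_of (G n) u v t <-> st n u v t.
Proof. case: t => /=; by rewrite ?edgeA_iff ?edgeB_iff. Qed.

Lemma interior_iff n (v : gv) : @interior (G n) v <-> ip v /\ lev v < n.
Proof. rewrite /interior inG_iff; split => [[[h1 h2] h3]|[h1 h2]]; [by split|split; [split; [exact h1| exact: ltnW h2]| exact h2]]. Qed.

Lemma outcome_iff n (v : gv) : @outcome (G n) v <-> ip v /\ lev v = n.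
Proof. rewrite /outcome inG_iff; split => [[[h1 h2] h3]|[h1 h2]]; split => //; split => //; by rewrite h2. Qed.


Definition node := (option stype * gv * option stype)%type.
Definition nin (nd : node) := nd.1.1.
Definition vtx (nd : node) := nd.1.2.
Definition nout (nd : node) := nd.2.
Lemma vtxE (a : option stype) (v : gv) (b : option stype) : vtx (a, v, b) = v. Proof. by []. Qed.
Lemma ninE (a : option stype) (v : gv) (b : option stype) : nin (a, v, b) = a. Proof. by []. Qed.
Lemma noutE (a : option stype) (v : gv) (b : option stype) : nout (a, v, b) = b. Proof. by []. Qed.
Definition link n (a b : node) : Prop :=
  exists t, nout a = Some t /\ nin b = Some t /\ st n (vtx a) (vtx b) t.
Definition ncls (nd : node) : nat :=
  match nin nd, nout nd with
  | None, _ => 0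
  | Some _, None => 2
  | Some a, Some b => if is_up a then (if is_up b then 0 else 3) else (if is_up b then 1 else 2)
  end.
Definition compat (c1 c2 : nat) : bool := if c1 == 3 then c2 != 3 else (c2 == 3) || (c1 < c2).
Definition CR (a b : node) : Prop := vtx a = vtx b -> compat (ncls a) (ncls b).
Definition nodeOK n (nd : node) : Prop :=
  match nin nd, nout nd with
  | Some a, Some b => (lev (vtx nd) < n -> allowed_int a b) /\ (lev (vtx nd) = n -> allowed_bd a b)
  | _, _ => True
  end.
Definition n0of t0 : node := (None, root, Some t0).
Definition Valid n (x : gv -> bool) (W : seq node) : Prop :=
  exists t0 W', W = n0of t0 :: W' /\ (t0 = su \/ t0 = ru) /\
  chain (link n) (n0of t0) W' /\
  (exists t, last (n0of t0) W' = (Some t, root, None) /\ (t = sd \/ t = rd)) /\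
  (forall nd, List.In nd W -> nodeOK n nd /\ ip (vtx nd) /\ lev (vtx nd) <= n /\
       (lev (vtx nd) = n -> x (vtx nd) = false)) /\
  pw CR W.

Lemma st_mono n u v t : st n u v t -> st n.+1 u v t.
Proof.
rewrite /st /EA /EB; case: t => [[h1 [h2 h3]]|[h1 [h2 h3]]|[h1 [h2 h3]]|[h1 [h2 h3]]|[h1 [h2 h3]]|[h1 [h2 h3]]];
  (split; [done| split; [exact: ltn_trans h2 (ltnSn n)|done]]).
Qed.

Lemma st_lev n u v t : st n u v t -> if is_up t then lev v = (lev u).+1 else lev u = (lev v).+1.
Proof.
rewrite /st /EA /EB; case: t => /=; move=> [_ [_ H]];
  try (case: H => _ [k ->]; by rewrite lev_ca); case: H => _ ->; by rewrite lev_cb.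
Qed.

Lemma st_info n u v t : st n u v t ->
  ip u /\ ip v /\ lev u <= n /\ lev v <= n.
Proof.
move=> H; have L := st_lev H; move: H.
rewrite /st /EA /EB; case: t L => /= L [h1 [h2 [h3 h4]]].
- have hv : ip v by case: h4 => k ->; apply: ip_ca.
  rewrite L; split => //; split => //; split => //; exact: ltnW.
- have hv : ip u by case: h4 => k ->; apply: ip_ca.
  rewrite L; split => //; split => //; split => //; exact: ltnW.
- have hv : ip v by rewrite h4; apply: ip_cb.
  rewrite L; split => //; split => //; split => //; exact: ltnW.
- have hv : ip u by rewrite h4; apply: ip_cb.
  rewrite L; split => //; split => //; split => //; exact: ltnW.
- have hv : ip v by rewrite h4; apply: ip_cb.
  rewrite L; split => //; split => //; split => //; exact: ltnW.
- have hv : ip u by rewrite h4; apply: ip_cb.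
  rewrite L; split => //; split => //; split => //; exact: ltnW.
Qed.

Lemma st_edge n u v t : st n u v t -> @edgeG (G n) u v \/ @edgeG (G n) v u.
Proof.
move/step_iff; case: t => /= H; [left; exact: H.1|right; exact: H.1|left; exact: H.1|
  right; exact: H.1|left; exact: H.1|right; exact: H.1].
Qed.

Lemma Valid_toom n x W : Valid n x W -> @toom_present (G n) x.
Proof.
move=> [t0 [W' [EW [Ht0 [Hch [[tl [Hlast Htl]] [Hall Hpw]]]]]]].
set d := n0of t0.
pose psi k : gv := vtx (nth d W k).
pose tau k : stype := if nin (nth d W k) is Some t then t else su.
have [l El] : exists l, size W' = l by exists (size W').
have Hnth0 : nth d W 0 = d by rewrite EW.
have HnthS : forall k, nth d W k.+1 = nth d W' k by move=> k; rewrite EW.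
have Hlink : forall k, 0 < k <= l -> link n (nth d W k.-1) (nth d W k).
  move=> [|k] // /andP [_ Hk]. rewrite EW /=. apply: chain_nth Hch _. by rewrite El.
have Hl : nth d W l = (Some tl, root, None).
  rewrite EW -Hlast -El. by have /= := nth_last d (d :: W').
have Hl1 : 0 < l.
  rewrite -El; case: W' Hlast {EW Hch HnthS Hlink Hl El} => [|a s] //=.
have Hin : forall k, 0 < k <= l -> nin (nth d W k) = Some (tau k).
  move=> k Hk; have [t [_ [h _]]] := Hlink k Hk; by rewrite /tau h.
have Hout : forall k, k < l -> nout (nth d W k) = Some (tau k.+1).
  move=> k Hk; have [t [h1 [h2 _]]] := Hlink k.+1 Hk; by rewrite /tau h2 h1.
have Hst : forall k, 0 < k <= l -> st n (psi k.-1) (psi k) (tau k).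
  move=> k Hk; have [t [_ [h2 h3]]] := Hlink k Hk; by rewrite /tau h2.
have HIn : forall k, k <= l -> List.In (nth d W k) W.
  move=> k Hk; apply: In_nth; by rewrite EW /= ltnS El.
have Hnode : forall k, 0 < k < l -> nth d W k = (Some (tau k), psi k, Some (tau k.+1)).
  move=> k /andP [Hk1 Hk2]. rewrite /psi -(Hin k) ?Hk1 ?(ltnW Hk2) // -(Hout k) //.
  by case: (nth d W k) => [[? ?] ?].
have Htau1 : tau 1 = t0.
  have [t [h1 [h2 _]]] := Hlink 1 (Hl1 : 0 < 1 <= l). rewrite /= Hnth0 /d /n0of /nout /= in h1.
  case: h1 => ->. by rewrite /tau h2.
have Htaul : tau l = tl by rewrite /tau Hl.
have Hup0 : is_up t0 by case: Ht0 => ->.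
have Hdn : ~~ is_up tl by case: Htl => ->.
have Hl2 : 1 < l.
  case: l El Hl1 Hl Hlink Htaul Hin {Hst Hnode HIn Hout} => [|[|l]] // El _ Hl Hlink Htaul Hin.
  have := Hin 1 isT. rewrite Hl /= Htau1 => -[E]. by rewrite E Hup0 in Hdn.
have Hcls : forall r k, k <= l -> Nclass tau l r k -> r <= 2 /\ ncls (nth d W k) = r.
  move=> r k Hk; case: r => [|[|[|r]]] //=.
  - case=> [->|[Hkl [H1 H2]]]; first by rewrite Hnth0.
    by rewrite Hnode // /ncls /= H1 H2.
  - move=> [Hkl [H1 H2]]. rewrite Hnode // /ncls /=. by move: H1; case: (is_up (tau k)) => //= _; rewrite H2.
  - case=> [->|[Hkl [H1 H2]]]; first by rewrite Hl.
    rewrite Hnode // /ncls /=. move: H1 H2; by case: (is_up (tau k)); case: (is_up (tau k.+1)).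
have Hast : forall k, Nast tau l k -> ncls (nth d W k) = 3.
  move=> k [Hkl [H1 H2]]. rewrite Hnode // /ncls /= H1. by move: H2; case: (is_up (tau k.+1)).
have HCR : forall i j, i < j <= l -> psi i = psi j -> compat (ncls (nth d W i)) (ncls (nth d W j)).
  move=> i j /andP [Hij Hjl] E. have Hj : j < size W by rewrite EW /= ltnS El.
  have := pw_nth d Hpw Hij Hj. by apply.
exists l, psi; split; last first.
  move=> k Hk /outcome_iff [_ E]. by have [_ [_ [_ h]]] := Hall _ (HIn k Hk); apply: h.
split => //; split.
  move=> k Hk; have := Hst k Hk. move/st_edge. by [].
exists tau; split.
  move=> k Hk; apply/step_iff. exact: Hst.
split; first by rewrite /psi Hnth0.
split; first by rewrite /psi Hl.
split; first by rewrite Htau1; case: Ht0 => ->; [left|right].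
split; first by rewrite Htaul; case: Htl => ->; [left|right].
split.
  move=> k Hk /interior_iff [_ Hlt]. have := (Hall _ (HIn k (ltnW (proj2 (andP Hk))))).1.
  by rewrite Hnode // /nodeOK /= => -[h _]; apply: h.
split.
  move=> k Hk /outcome_iff [_ Heq]. have := (Hall _ (HIn k (ltnW (proj2 (andP Hk))))).1.
  by rewrite Hnode // /nodeOK /= => -[_ h]; apply: h.
split.
  move=> k m Hk Hm Hkm E. have Hkl : k <= l by case: Hk => /andP [_ /ltnW].
  have Hml : m <= l by case: Hm => /andP [_ /ltnW].
  case: (ltngtP k m) => [H|H|H]; last by [].
  - have := HCR k m; rewrite H Hml => /(_ isT E). by rewrite !Hast.
  - have := HCR m k; rewrite H Hkl => /(_ isT (esym E)). by rewrite !Hast.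
move=> k m s0 t1 Hst01 Hk Hm E.
have Hkl : k <= l.
  case: s0 Hk {Hst01} => [|[|[|?]]] //=; [case=> [->|[/andP [_ /ltnW]]] //| case=> /andP [_ /ltnW] //|
    case=> [->|[/andP [_ /ltnW]]] //].
have Hml : m <= l.
  case: t1 Hm {Hst01} => [|[|[|?]]] //=; [case=> [->|[/andP [_ /ltnW]]] //| case=> /andP [_ /ltnW] //|
    case=> [->|[/andP [_ /ltnW]]] //].
have [hs cs] := Hcls _ _ Hkl Hk. have [ht ct] := Hcls _ _ Hml Hm.
rewrite leqNgt; apply/negP => Hmk.
have := HCR m k; rewrite Hmk Hkl => /(_ isT (esym E)). rewrite cs ct /compat.
have -> : (t1 == 3) = false by case: t1 ht {Hm ct Hst01}=> [|[|[|]]].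
have -> : (s0 == 3) = false by case: s0 hs {Hk cs Hst01}=> [|[|[|]]].
move=> /= H. have := leq_trans H Hst01. by rewrite ltnn.
Qed.

Fixpoint wins (x : gv -> bool) (d : nat) (v : gv) : Prop :=
  match d with
  | 0 => x v = false
  | d'.+1 => if Al v then exists k, wins x d' (ca v k) else forall k, wins x d' (cb v k)
  end.

Definition win1b (x : gv -> bool) (v : gv) : bool :=
  if Al v then ~~ x (ca v One) || ~~ x (ca v Two) else ~~ x (cb v One) && ~~ x (cb v Two).
Definition xs (x : gv -> bool) (v : gv) : bool := ~~ win1b x v.

Lemma wins1 x v : wins x 1 v <-> win1b x v.
Proof.
rewrite /= /win1b; case: (Al v); split.
- by case=> -[] ->; rewrite ?orbT.
- case/orP => /negPf H; by eexists; exact H.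
- move=> H; by rewrite (H One) (H Two).
- by case/andP => /negPf h1 /negPf h2 -[].
Qed.

Lemma wins_shift x d v : wins x d.+1 v <-> wins (xs x) d v.
Proof.
elim: d v => [|d IH] v.
- rewrite wins1 /= /xs; split => [->|/negbFE] //.
- change (wins x d.+2 v) with (if Al v then exists k, wins x d.+1 (ca v k) else forall k, wins x d.+1 (cb v k)).
  change (wins (xs x) d.+1 v) with (if Al v then exists k, wins (xs x) d (ca v k) else forall k, wins (xs x) d (cb v k)).
  case: (Al v); split.
  + by case=> k /IH H; exists k.
  + by case=> k H; exists k; apply/IH.
  + by move=> H k; apply/IH.
  + by move=> H k; apply/IH.
Qed.

Lemma reach_ip n (s : gv -> gv) v : @alice_strategy (G n) s -> @reach (G n) s v -> ip v /\ lev v <= n.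
Proof.
move=> Hs; elim=> [|u _ IH Ha|u w _ IH Hb He].
- split; [exact: ip_root| by rewrite lev_root].
- have := Hs u Ha => /edgeG_iff [h1 [h2 H]].
  case: H => [[A [k ->]]|[A [k ->]]]; split; rewrite ?lev_ca ?lev_cb //; by [apply: ip_ca|apply: ip_cb].
- move/edgeG_iff: He => [h1 [h2 H]].
  case: H => [[A [k ->]]|[A [k ->]]]; split; rewrite ?lev_ca ?lev_cb //; by [apply: ip_ca|apply: ip_cb].
Qed.

Lemma alice_wins_wins n x : @alice_wins (G n) x -> wins x n root.
Proof.
move=> [s [Hs Hw]].
suff H : forall d v, @reach (G n) s v -> lev v + d = n -> wins x d v.
  by apply: H; [constructor| rewrite lev_root].
elim=> [|d IH] v Hr Hl.
- apply: Hw => //. apply/outcome_iff; split; [exact: (reach_ip Hs Hr).1| by rewrite -Hl addn0].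
- have [hip _] := reach_ip Hs Hr. have Hlt : lev v < n by rewrite -Hl; lia.
  rewrite /=. case A: (Al v).
  + have Ha : @alice_turn (G n) v by apply/alice_iff; rewrite A.
    have := Hs v Ha => /edgeG_iff [_ [_ [[_ [k Ek]]|[A' _]]]]; last by rewrite A in A'.
    exists k. apply: IH; first by rewrite -Ek; apply: reach_alice.
    by rewrite lev_ca -Hl addSnnS.
  + move=> k. have Hb : @bob_turn (G n) v by apply/bob_iff; rewrite A.
    apply: IH; last by rewrite lev_cb -Hl addSnnS.
    apply: reach_bob Hb _ => //. apply/edgeG_iff; split => //; split => //; right; rewrite A; split => //; by exists k.
Qed.

Ltac lfalse := let h := fresh "h" in move=> h; exfalso; lia.

Definition V (s : seq node) (u : gv) : Prop := exists nd, List.In nd s /\ vtx nd = u.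

Lemma V_cat s1 s2 u : V (s1 ++ s2) u <-> V s1 u \/ V s2 u.
Proof.
split.
- move=> [nd [/List.in_app_iff [H|H] E]]; [left|right]; by exists nd.
- case=> [[nd [H E]]|[nd [H E]]]; exists nd; split => //; apply/List.in_app_iff; by [left|right].
Qed.

Lemma V_cons nd s u : V (nd :: s) u <-> vtx nd = u \/ V s u.
Proof.
split.
- move=> [nd' [[<-|H] E]]; [by left| right; by exists nd'].
- case=> [E|[nd' [H E]]]; [exists nd; split => //; by left| exists nd'; split => //; by right].
Qed.

Lemma V_In nd s : List.In nd s -> V s (vtx nd).
Proof. by move=> H; exists nd. Qed.

Lemma ca_inj u u' k : ca u k = ca u' k -> u = u'.
Proof.
case: u u' => [a b] [a' b'] [E1 E2]. by rewrite (hinj1 E1) E2.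
Qed.

Lemma cb_inj u u' k : cb u k = cb u' k -> u = u'.
Proof.
case: u u' => [a [i j]] [a' [i' j']]; case: k => /= [[-> -> ->]|[-> -> ->]] //.
Qed.

Lemma cb12 u : cb u One <> cb u Two.
Proof. case: u => [a [i j]] /= [E]; lia. Qed.

Lemma lev_neq u v : lev u <> lev v -> u <> v.
Proof. by move=> H E; apply: H; rewrite E. Qed.

Lemma Al_lev u v : lev u = lev v -> Al u = Al v.
Proof. by rewrite /Al => ->. Qed.

Lemma three_parents u1 u2 u3 k1 k2 k3 c :
  ca u1 k1 = c -> ca u2 k2 = c -> ca u3 k3 = c -> u1 = u2 \/ u1 = u3 \/ u2 = u3.
Proof.
move=> E1 E2 E3.
case: k1 E1 => E1; case: k2 E2 => E2; case: k3 E3 => E3;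
  first [ left; apply: (@ca_inj _ _ One); by rewrite E1 E2
        | left; apply: (@ca_inj _ _ Two); by rewrite E1 E2
        | right; left; apply: (@ca_inj _ _ One); by rewrite E1 E3
        | right; left; apply: (@ca_inj _ _ Two); by rewrite E1 E3
        | right; right; apply: (@ca_inj _ _ One); by rewrite E2 E3
        | right; right; apply: (@ca_inj _ _ Two); by rewrite E2 E3 ].
Qed.

Section Step.
Variable n : nat.
Hypothesis hn : 0 < n.
Variable x : gv -> bool.

Definition Uq (r : seq node) : Prop :=
  forall s1 nd s2, r = s1 ++ nd :: s2 -> lev (vtx nd) = n -> ~ V (s1 ++ s2) (vtx nd).

Definition PeakShape (nd : node) : Prop :=
  exists a b, nin nd = Some a /\ nout nd = Some b /\
    (if Al (vtx nd) then (a = ru \/ a = lu) /\ (b = rd \/ b = ld) else a = su /\ b = sd).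

Definition NP (nd : node) : Prop :=
  nodeOK n nd /\ ip (vtx nd) /\ lev (vtx nd) <= n /\ (lev (vtx nd) = n -> win1b x (vtx nd)).

Definition RP (prev : node) (r : seq node) : Prop :=
  chain (link n) prev r /\ (forall nd, List.In nd r -> NP nd) /\ Uq r /\
  (forall nd, List.In nd r -> lev (vtx nd) = n -> PeakShape nd) /\
  (r <> [::] -> lev (vtx (last prev r)) < n).

Definition Gen (u y : gv) : Prop :=
  lev u = n /\ ((Al u /\ exists k, y = ca u k) \/ (~~ Al u /\ exists k, y = cb u k)).

Inductive Zig : node -> seq node -> seq node -> seq node -> Prop :=
| Z_step ez r pre ez' post Z cont :
    r = pre ++ ez' :: post -> cb (vtx ez') One = cb (vtx ez) Two ->
    Zig ez' post Z cont ->
    Zig ez r ((Some lu, cb (vtx ez) Two, Some ld) :: (Some ld, vtx ez', Some lu) :: Z) cont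
| Z_stop ez r :
    (forall nd, List.In nd r -> cb (vtx nd) One <> cb (vtx ez) Two) ->
    Zig ez r [:: (Some lu, cb (vtx ez) Two, Some rd); (Some rd, vtx ez, nout ez)] r.

Inductive Gad : node -> seq node -> seq node -> seq node -> Prop :=
| GA_jump nd k r pre e post :
    Al (vtx nd) -> x (ca (vtx nd) k) = false -> r = pre ++ e :: post ->
    (exists k', ca (vtx e) k' = ca (vtx nd) k) ->
    Gad nd r [:: (nin nd, vtx nd, Some su); (Some su, ca (vtx nd) k, Some sd); (Some sd, vtx e, nout e)] post
| GA_stay nd k r :
    Al (vtx nd) -> x (ca (vtx nd) k) = false ->
    (forall e, List.In e r -> ~ exists k', ca (vtx e) k' = ca (vtx nd) k) ->
    Gad nd r [:: (nin nd, vtx nd, Some su); (Some su, ca (vtx nd) k, Some sd); (Some sd, vtx nd, nout nd)] r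
| GB_jump nd r pre e post :
    ~~ Al (vtx nd) -> r = pre ++ e :: post -> cb (vtx e) Two = cb (vtx nd) One ->
    Gad nd r [:: (nin nd, vtx nd, Some ru); (Some ru, cb (vtx nd) One, Some rd); (Some rd, vtx e, nout e)] post
| GB_zig nd r Z cont :
    ~~ Al (vtx nd) -> (forall e, List.In e r -> cb (vtx e) Two <> cb (vtx nd) One) -> Zig nd r Z cont ->
    Gad nd r ((nin nd, vtx nd, Some ru) :: (Some ru, cb (vtx nd) One, Some ld) :: (Some ld, vtx nd, Some lu) :: Z) cont.

Inductive Proc : seq node -> seq node -> Prop :=
| P_nil : Proc [::] [::]
| P_low nd r W : lev (vtx nd) != n -> Proc r W -> Proc (nd :: r) (nd :: W)
| P_peak nd r g cont W : lev (vtx nd) = n -> Gad nd r g cont -> Proc cont W -> Proc (nd :: r) (g ++ W).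

Lemma Zig_ex r ez :
  lev (vtx ez) = n -> (forall nd, List.In nd r -> lev (vtx nd) <= n) ->
  exists Z cont, Zig ez r Z cont /\ exists s, r = s ++ cont.
Proof.
move: {2}(size r) (leqnn (size r)) => m; elim: m r ez => [|m IH] r ez Hs Hz Hr.
- case: r Hs Hr => // _ _. exists [:: (Some lu, cb (vtx ez) Two, Some rd); (Some rd, vtx ez, nout ez)], [::].
  split; [by constructor| by exists [::]].
case: (classic (exists nd, List.In nd r /\ cb (vtx nd) One = cb (vtx ez) Two)) => [[nd [Hin E]]|H].
- have [pre [post Er]] := List.in_split _ _ Hin.
  have Hl : lev (vtx nd) = n.
    have : lev (cb (vtx nd) One) = lev (cb (vtx ez) Two) by rewrite E.
    by rewrite !lev_cb Hz => -[].
  have Hsz : size post <= m.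
    move: Hs; rewrite Er size_cat /=; lia.
  have [Z [cont [HZ [s Es]]]] := IH post nd Hsz Hl (fun nd' h => Hr nd' ltac:(rewrite Er; apply/List.in_app_iff; right; by right)).
  exists ((Some lu, cb (vtx ez) Two, Some ld) :: (Some ld, vtx nd, Some lu) :: Z), cont.
  split; first by apply: Z_step Er E HZ.
  exists (pre ++ nd :: s). by rewrite Er Es -catA.
- exists [:: (Some lu, cb (vtx ez) Two, Some rd); (Some rd, vtx ez, nout ez)], r.
  split; last by exists [::].
  constructor => nd Hnd E. apply: H. by exists nd.
Qed.

Lemma Gad_ex nd r :
  lev (vtx nd) = n -> win1b x (vtx nd) -> (forall e, List.In e r -> lev (vtx e) <= n) ->
  exists g cont, Gad nd r g cont /\ exists s, r = s ++ cont.
Proof.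
move=> Hl Hw Hr. move: Hw; rewrite /win1b. case A: (Al (vtx nd)).
- move=> Hw. have [k Hk] : exists k, x (ca (vtx nd) k) = false.
    case/orP: Hw => /negPf H; by eexists; exact H.
  case: (classic (exists e, List.In e r /\ exists k', ca (vtx e) k' = ca (vtx nd) k)) => [[e [He E]]|H].
  + have [pre [post Er]] := List.in_split _ _ He.
    eexists; exists post; split; first by apply: GA_jump; [rewrite A| exact Hk| exact Er| exact E].
    exists (pre ++ [:: e]); by rewrite Er -catA.
  + eexists; exists r; split; last by exists [::].
    apply: GA_stay; [by rewrite A| exact Hk|] => e He E; apply: H; by exists e.
- move=> _.
  case: (classic (exists e, List.In e r /\ cb (vtx e) Two = cb (vtx nd) One)) => [[e [He E]]|H].
  + have [pre [post Er]] := List.in_split _ _ He.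
    eexists; exists post; split; first by apply: GB_jump; [rewrite A| exact Er| exact E].
    exists (pre ++ [:: e]); by rewrite Er -catA.
  + have [Z [cont [HZ Hs]]] := Zig_ex Hl Hr.
    eexists; exists cont; split => //. apply: GB_zig; [by rewrite A| move=> e He E; apply: H; by exists e| exact HZ].
Qed.

Lemma Proc_ex r :
  (forall nd, List.In nd r -> lev (vtx nd) <= n /\ (lev (vtx nd) = n -> win1b x (vtx nd))) ->
  exists W, Proc r W.
Proof.
move: {2}(size r) (leqnn (size r)) => m; elim: m r => [|m IH] r Hs Hr.
- case: r Hs Hr => // _ _. exists [::]; constructor.
case: r Hs Hr => [|nd r] Hs Hr; first by exists [::]; constructor.
have Hr' : forall e, List.In e r -> lev (vtx e) <= n /\ (lev (vtx e) = n -> win1b x (vtx e)).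
  move=> e He; apply: Hr; by right.
case E: (lev (vtx nd) == n).
- move/eqP: E => E. have [h1 h2] := Hr nd (or_introl erefl).
  have [g [cont [HG [s Es]]]] := Gad_ex E (h2 E) (fun e He => (Hr' e He).1).
  have [W HW] : exists W, Proc cont W.
    apply: IH; first by move: Hs; rewrite Es /= size_cat; lia.
    move=> e He; apply: Hr'; rewrite Es; apply/List.in_app_iff; by right.
  exists (g ++ W); exact: P_peak E HG HW.
- have [W HW] : exists W, Proc r W by apply: IH.
  exists (nd :: W); constructor => //; by rewrite E.
Qed.

Lemma last_ne A (a b : A) s : s <> [::] -> last a s = last b s.
Proof. by case: s. Qed.

Lemma Uq_suffix s r : Uq (s ++ r) -> Uq r.
Proof.
move=> H s1 nd s2 E Hl HV. apply: (H (s ++ s1) nd s2); [by rewrite E catA| exact Hl|].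
move/V_cat: HV => [HV|HV]; apply/V_cat; [left; apply/V_cat; by right| by right].
Qed.

Lemma Uq_head nd r : Uq (nd :: r) -> lev (vtx nd) = n -> ~ V r (vtx nd).
Proof. move=> H Hl; exact: (H [::] nd r erefl Hl). Qed.

Lemma Uq_mid s1 e s2 : Uq (s1 ++ e :: s2) -> lev (vtx e) = n -> ~ V s1 (vtx e) /\ ~ V s2 (vtx e).
Proof. move=> H Hl; have := H s1 e s2 erefl Hl; rewrite V_cat; split; auto. Qed.

Lemma Gen_lev u y : Gen u y -> lev u = n /\ lev y = n.+1.
Proof. by move=> [H [[_ [k ->]]|[_ [k ->]]]]; rewrite ?lev_ca ?lev_cb H. Qed.

Definition NQ (nd : node) : Prop :=
  nodeOK n.+1 nd /\ ip (vtx nd) /\ lev (vtx nd) <= n.+1 /\ (lev (vtx nd) = n.+1 -> x (vtx nd) = false).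

Definition ZigOut (ez : node) (r Z cont : seq node) : Prop :=
  (exists s, r = s ++ cont) /\
  (exists pre e, ez :: r = pre ++ e :: cont /\ Z <> [::] /\ last ez Z = (Some rd, vtx e, nout e)) /\
  chain (link n.+1) (Some ld, vtx ez, Some lu) Z /\
  (forall nd, List.In nd Z -> NQ nd) /\
  (forall nd, List.In nd Z -> (lev (vtx nd) = n /\ V (ez :: r) (vtx nd)) \/
      (lev (vtx nd) = n.+1 /\ exists y, (y = vtx ez \/ V r y) /\ vtx nd = cb y Two)) /\
  pw CR Z /\
  (forall nd, List.In nd Z -> forall u, V cont u -> lev u = n -> vtx nd <> u /\ ~ Gen u (vtx nd)) /\
  (forall nd, List.In nd Z -> vtx nd = vtx ez -> ncls nd = 2).

Lemma Zig_props ez r Z cont : Zig ez r Z cont ->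
  lev (vtx ez) = n -> ~~ Al (vtx ez) -> ip (vtx ez) -> win1b x (vtx ez) -> PeakShape ez ->
  ~ V r (vtx ez) -> Uq r -> (forall nd, List.In nd r -> NP nd) ->
  (forall nd, List.In nd r -> lev (vtx nd) = n -> PeakShape nd) ->
  ZigOut ez r Z cont.
Proof.
elim=> {ez r Z cont} [ez r pre ez' post Z cont Er E HZ IH|ez r Hno]
  Hz Az ipz wz psz Hnv Huq Hnp Hps.
-
  have Hin' : List.In ez' r by rewrite Er; apply/List.in_app_iff; right; left.
  have Hz' : lev (vtx ez') = n.
    have : lev (cb (vtx ez') One) = lev (cb (vtx ez) Two) by rewrite E.
    by rewrite !lev_cb Hz => -[].
  have Az' : ~~ Al (vtx ez') by rewrite (Al_lev (u := vtx ez') (v := vtx ez)) ?Hz'.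
  have [np1 [ip' [_ w']]] := Hnp _ Hin'.
  have Huq' : Uq (pre ++ ez' :: post) by rewrite -Er.
  have [Hu1 Hu2] := Uq_mid Huq' Hz'.
  have Huq2 : Uq post by apply: (@Uq_suffix (pre ++ [:: ez'])); rewrite -catA.
  have HsubI : forall nd, List.In nd post -> List.In nd r.
    move=> nd h; rewrite Er; apply/List.in_app_iff; right; by right.
  have Hsub : forall u, V post u -> V r u.
    move=> u Hu; rewrite Er; apply/V_cat; right; apply/V_cons; by right.
  have [[s Es] [[pre' [e [Ee [Zne Zl]]]] [Zch [ZNQ [Z5 [Zpw [Z7 Z8]]]]]]] :=
    IH Hz' Az' ip' (w' Hz') (Hps _ Hin' Hz') Hu2 Huq2
       (fun nd h => Hnp nd (HsubI _ h)) (fun nd h => Hps nd (HsubI _ h)).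
  have Hsubc : forall u, V cont u -> V post u.
    move=> u Hu; rewrite Es; apply/V_cat; by right.
  set d := cb (vtx ez) Two.
  have Ld : lev d = n.+1 by rewrite /d lev_cb Hz.
  have ipd : ip d by apply: ip_cb.
  have xd : x d = false by move: wz; rewrite /win1b (negbTE Az) => /andP [_ /negPf].
  have Ndz : d <> vtx ez' by apply: lev_neq; rewrite Ld Hz'; lia.
  have Hzz' : vtx ez' <> vtx ez by move=> h; apply: Hnv; rewrite -h; exact: V_In.
  split; first by exists (pre ++ ez' :: s); rewrite Er Es -catA.
  split.
    exists (ez :: pre ++ pre'), e; split; first by rewrite Er /= -catA -Ee.
    split => //. rewrite /= -Zl. exact: last_ne.
  split.
    constructor; first by exists lu; split => //; split => //; rewrite /= /EB Hz; split => //; split => //; split.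
    constructor; first by exists ld; split => //; split => //; rewrite /= /EB Hz'; split => //; split => //; split.
    exact: Zch.
  split.
    move=> nd [<-|[<-|H]]; last exact: ZNQ.
    + rewrite /NQ /nodeOK /= Ld; split; [split => //; lia|]. split => //; split => //.
    + rewrite /NQ /nodeOK /= Hz'; split; [split => //; lia|]. split => //; split; [lia|lia].
  split.
    move=> nd [<-|[<-|H]].
    + right; split => //; exists (vtx ez); split => //; by left.
    + left; split => //; apply/V_cons; right; exact: V_In Hin'.
    + case: (Z5 nd H) => [[h1 h2]|[h1 [y [h2 h3]]]].
      * left; split => //; apply/V_cons; right. move/V_cons: h2 => [<-|h2]; [exact: V_In Hin'| exact: Hsub].
      * right; split => //; exists y; split => //; right; case: h2 => [->|h2]; [exact: V_In Hin'| exact: Hsub].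
  split.
    constructor.
    + move=> b [<-|Hb] E'; first by exfalso; apply: Ndz.
      exfalso; case: (Z5 b Hb) => [[h1 _]|[h1 [y [h2 h3]]]]; first by move: h1; rewrite -E' Ld; lia.
      move: h3; rewrite -E' /d => /cb_inj Ey. case: h2 => [h2|h2]; first by apply: Hzz'; rewrite -h2.
      apply: Hnv; rewrite Ey; exact: Hsub.
    constructor; last exact: Zpw.
    move=> b Hb E'. by rewrite (Z8 b Hb (esym E')).
  split.
    move=> nd [<-|[<-|H]] u Hu Hlu.
    + split; first by apply: lev_neq; rewrite Ld Hlu; lia.
      move=> [_ [[Au _]|[_ [k Ek]]]].
      * have : Al u = Al (vtx ez) by apply: Al_lev; rewrite Hlu Hz.
        by rewrite Au (negbTE Az).
      * case: k Ek => Ek.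
        -- have Eu : u = vtx ez' by apply: (@cb_inj _ _ One); rewrite E -Ek.
           apply: Hu2; rewrite -Eu; exact: Hsubc.
        -- have Eu : u = vtx ez by apply: (@cb_inj _ _ Two); rewrite -Ek.
           apply: Hnv; rewrite -Eu; exact: Hsub (Hsubc _ Hu).
    + split; first by rewrite vtxE => h; apply: Hu2; rewrite h; exact: Hsubc.
      move/Gen_lev => [_]; rewrite Hz'; lia.
    + exact: Z7.
  move=> nd [<-|[<-|H]] Ee'; rewrite ?vtxE in Ee'.
  + exfalso; move: Ld; rewrite Ee' Hz; lia.
  + by exfalso; apply: Hzz'.
  + exfalso; case: (Z5 nd H) => [[h1 h2]|[h1 _]]; last by move: h1; rewrite Ee' Hz; lia.
    move/V_cons: h2 => [h2|h2]; first by apply: Hzz'; rewrite h2.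
    apply: Hnv; rewrite -Ee'; exact: Hsub.
-
  set d := cb (vtx ez) Two.
  have Ld : lev d = n.+1 by rewrite /d lev_cb Hz.
  have ipd : ip d by apply: ip_cb.
  have xd : x d = false by move: wz; rewrite /win1b (negbTE Az) => /andP [_ /negPf].
  have [a [b [Ea [Eb Hab]]]] := psz. rewrite (negbTE Az) in Hab. case: Hab => ? ?; subst a b.
  split; first by exists [::].
  split; first by exists [::], ez; split => //; split.
  split.
    constructor; first by exists lu; split => //; split => //; rewrite /= /EB Hz; split => //; split => //; split.
    constructor; first by exists rd; split => //; split => //; rewrite /= /EB Hz; split => //; split => //; split.
    constructor.
  split.
    move=> nd [<-|[<-|[]]].
    + rewrite /NQ /nodeOK /= Ld; split; [split => //; lia|]. split => //; split => //.
    + rewrite /NQ /nodeOK /= Eb Hz; split; [split => //; lia|]. split => //; split; [lia|lia].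
  split.
    move=> nd [<-|[<-|[]]].
    + right; split => //; exists (vtx ez); split => //; by left.
    + left; split => //; apply/V_cons; by left.
  split.
    constructor; last by constructor; [move=> ? []| constructor].
    move=> b' [<-|[]] E'; rewrite !vtxE in E'; exfalso; move: Ld; rewrite E' Hz; lia.
  split.
    move=> nd [<-|[<-|[]]] u Hu Hlu.
    + split; first by apply: lev_neq; rewrite Ld Hlu; lia.
      move=> [_ [[Au _]|[_ [k Ek]]]].
      * have : Al u = Al (vtx ez) by apply: Al_lev; rewrite Hlu Hz.
        by rewrite Au (negbTE Az).
      * case: Hu => nd' [Hnd' Eu]. case: k Ek => Ek.
        -- apply: (Hno nd' Hnd'); by rewrite Eu -Ek.
        -- have Eu' : u = vtx ez by apply: (@cb_inj _ _ Two); rewrite -Ek.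
           apply: Hnv; rewrite -Eu'; by exists nd'.
    + split; first by rewrite vtxE => h; apply: Hnv; rewrite h.
      move/Gen_lev => [_]; rewrite vtxE Hz; lia.
  move=> nd [<-|[<-|[]]] Ee'; rewrite ?vtxE in Ee'.
  + exfalso; move: Ld; rewrite Ee' Hz; lia.
  + by rewrite /ncls /= Eb.
Qed.

Definition GadOut (prev nd : node) (r g cont : seq node) : Prop :=
  (exists s, r = s ++ cont) /\
  (exists pre e, nd :: r = pre ++ e :: cont /\ g <> [::] /\ vtx (last nd g) = vtx e /\ nout (last nd g) = nout e) /\
  chain (link n.+1) prev g /\
  (forall nd', List.In nd' g -> NQ nd' /\ n <= lev (vtx nd')) /\
  (forall nd', List.In nd' g -> (lev (vtx nd') = n /\ V (nd :: r) (vtx nd')) \/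
      (lev (vtx nd') = n.+1 /\ exists u, V (nd :: r) u /\ Gen u (vtx nd'))) /\
  pw CR g /\
  (forall nd', List.In nd' g -> forall u, V cont u -> lev u = n -> vtx nd' <> u /\ ~ Gen u (vtx nd')).

Lemma RP_suffix prev s e r : RP prev (s ++ e :: r) -> RP e r.
Proof.
move=> [Hch [Hnp [Huq [Hps Hl]]]].
have HI : forall nd, List.In nd r -> List.In nd (s ++ e :: r).
  move=> nd h; apply/List.in_app_iff; right; by right.
split; first by move/chain_cat: Hch => [_ H]; inversion H.
split; first by move=> nd h; apply: Hnp; apply: HI.
split; first by apply: (@Uq_suffix (s ++ [:: e])); rewrite -catA.
split; first by move=> nd h; apply: Hps; apply: HI.
move=> Hr. have Hne : s ++ e :: r <> [::].
  move=> h; have := f_equal size h; rewrite size_cat /=; lia.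
have := Hl Hne. by rewrite last_cat /=.
Qed.

Lemma RP_head prev nd r : RP prev (nd :: r) -> lev (vtx nd) = n ->
  ip (vtx nd) /\ win1b x (vtx nd) /\ PeakShape nd /\ ~ V r (vtx nd) /\ Uq r /\
  (forall e, List.In e r -> NP e) /\ (forall e, List.In e r -> lev (vtx e) = n -> PeakShape e) /\
  (forall o, link n.+1 prev (nin nd, vtx nd, o)).
Proof.
move=> [Hch [Hnp [Huq [Hps Hlast]]]] Hl.
have Hnd : List.In nd (nd :: r) by left.
have [np0 [ip0 [_ w0]]] := Hnp nd Hnd.
have Hlink : link n prev nd by inversion Hch.
have [t0 [Et0 [Et0' Hst0]]] := Hlink.
split => //; split; first exact: w0.
split; first exact: Hps.
split; first exact: Uq_head Huq Hl.
split; first by apply: (@Uq_suffix [:: nd]).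
split; first by move=> e h; apply: Hnp; right.
split; first by move=> e h; apply: Hps; right.
move=> o; exists t0; split => //; split; [by rewrite ninE -Et0'| exact: st_mono].
Qed.

Lemma CR_lev a b : lev (vtx a) <> lev (vtx b) -> CR a b.
Proof. by move=> H E; exfalso; apply: H; rewrite E. Qed.

Lemma pw3 A (R : A -> A -> Prop) a b c : R a b -> R a c -> R b c -> pw R [:: a; b; c].
Proof.
move=> h1 h2 h3; constructor; first by move=> y [<-|[<-|[]]].
constructor; first by move=> y [<-|[]].
constructor; [by move=> ? []| constructor].
Qed.

Lemma Gad_props prev nd r g cont : Gad nd r g cont -> lev (vtx nd) = n -> RP prev (nd :: r) ->
  GadOut prev nd r g cont.
Proof.
move=> HG; case: HG.
-
  move=> nd1 k r1 pre e post A xc Er [k' Ek'] Hl HRP.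
  have [ip0 [w0 [[a [b [Ea [Eb Hab]]]] [Hnv [Huq [Hnp [Hps Hlk]]]]]]] := RP_head HRP Hl.
  rewrite A in Hab. case: Hab => Ha Hb.
  set p := vtx nd1 in A xc Ek' Hl ip0 w0 Hnv Hlk *. set c := ca p k in xc Ek' *.
  have He : List.In e r1 by rewrite Er; apply/List.in_app_iff; right; left.
  have Lc : lev c = n.+1 by rewrite /c lev_ca Hl.
  have Le : lev (vtx e) = n.
    have : lev (ca (vtx e) k') = lev c by rewrite Ek'.
    by rewrite lev_ca Lc => -[].
  have Ae : Al (vtx e) by rewrite (Al_lev (u := vtx e) (v := p)) ?Le.
  have [npe [ipe [_ we]]] := Hnp e He.
  have [a' [b' [Ea' [Eb' Hab']]]] := Hps e He Le. rewrite Ae in Hab'. case: Hab' => _ Hb'.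
  have Huq1 : Uq (pre ++ e :: post) by rewrite -Er.
  have [Hu1 Hu2] := Uq_mid Huq1 Le.
  have Hsub : forall u, V post u -> V r1 u.
    move=> u Hu; rewrite Er; apply/V_cat; right; apply/V_cons; by right.
  split; first by exists (pre ++ [:: e]); rewrite Er -catA.
  split; first by exists (nd1 :: pre), e; rewrite Er.
  split.
    constructor; first exact: Hlk.
    constructor; first by exists su; split => //; split => //; rewrite /= /EA Hl; split => //; split => //; split => //; by exists k.
    constructor; first by exists sd; split => //; split => //; rewrite /= /EA Le; split => //; split => //; split => //; by exists k'.
    constructor.
  split.
    move=> nd' [<-|[<-|[<-|[]]]]; rewrite /NQ /nodeOK ?ninE ?noutE ?vtxE.
    + rewrite Ea Hl; split; last by []. split; [split; [by case: Ha => ->| lfalse]|].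
      split => //; split; [lia| lfalse].
    + rewrite Lc; split; last lia. split; [split; [lfalse| by []]|].
      split; [exact: ip_ca| split => //].
    + rewrite Eb' Le; split; last by []. split; [split; [by case: Hb' => ->| lfalse]|].
      split => //; split; [lia| lfalse].
  split.
    move=> nd' [<-|[<-|[<-|[]]]]; rewrite ?vtxE.
    + left; split => //; apply/V_cons; by left.
    + right; split => //; exists p; split; first by apply/V_cons; left.
      split => //; left; split => //; by exists k.
    + left; split => //; apply/V_cons; right; exact: V_In He.
  split.
    apply: pw3.
    + apply: CR_lev; rewrite !vtxE Hl Lc; lia.
    + move=> _; rewrite /ncls /= Ea Eb'. by case: Ha => ->; case: Hb' => ->.
    + apply: CR_lev; rewrite !vtxE Lc Le; lia.
  move=> nd' [<-|[<-|[<-|[]]]] u Hu Hlu; rewrite ?vtxE.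
  + split; first by move=> h; apply: Hnv; rewrite h; exact: Hsub.
    by move/Gen_lev => [_]; rewrite Hl; lia.
  + split; first by apply: lev_neq; rewrite Lc Hlu; lia.
    move=> [_ [[Au [k'' Ek'']]|[Au _]]].
    * have := three_parents (erefl c) Ek' (esym Ek''). case=> [E|[E|E]].
      -- apply: Hnv; rewrite E; exact: V_In He.
      -- apply: Hnv; rewrite E; exact: Hsub.
      -- apply: Hu2; by rewrite E.
    * have : Al u = Al p by apply: Al_lev; rewrite Hlu Hl.
      by rewrite A (negbTE Au).
  + split; first by move=> h; apply: Hu2; rewrite h.
    by move/Gen_lev => [_]; rewrite Le; lia.
-
  move=> nd1 k r1 A xc Hno Hl HRP.
  have [ip0 [w0 [[a [b [Ea [Eb Hab]]]] [Hnv [Huq [Hnp [Hps Hlk]]]]]]] := RP_head HRP Hl.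
  rewrite A in Hab. case: Hab => Ha Hb.
  set p := vtx nd1 in A xc Hno Hl ip0 w0 Hnv Hlk *. set c := ca p k in xc Hno *.
  have Lc : lev c = n.+1 by rewrite /c lev_ca Hl.
  split; first by exists [::].
  split; first by exists [::], nd1.
  split.
    constructor; first exact: Hlk.
    constructor; first by exists su; split => //; split => //; rewrite /= /EA Hl; split => //; split => //; split => //; by exists k.
    constructor; first by exists sd; split => //; split => //; rewrite /= /EA Hl; split => //; split => //; split => //; by exists k.
    constructor.
  split.
    move=> nd' [<-|[<-|[<-|[]]]]; rewrite /NQ /nodeOK ?ninE ?noutE ?vtxE.
    + rewrite Ea Hl; split; last by []. split; [split; [by case: Ha => ->| lfalse]|].
      split => //; split; [lia| lfalse].
    + rewrite Lc; split; last lia. split; [split; [lfalse| by []]|].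
      split; [exact: ip_ca| split => //].
    + rewrite Eb Hl; split; last by []. split; [split; [by case: Hb => ->| lfalse]|].
      split => //; split; [lia| lfalse].
  split.
    move=> nd' [<-|[<-|[<-|[]]]]; rewrite ?vtxE.
    + left; split => //; apply/V_cons; by left.
    + right; split => //; exists p; split; first by apply/V_cons; left.
      split => //; left; split => //; by exists k.
    + left; split => //; apply/V_cons; by left.
  split.
    apply: pw3.
    + apply: CR_lev; rewrite !vtxE Hl Lc; lia.
    + move=> _; rewrite /ncls /= Ea Eb. by case: Ha => ->; case: Hb => ->.
    + apply: CR_lev; rewrite !vtxE Lc Hl; lia.
  move=> nd' [<-|[<-|[<-|[]]]] u Hu Hlu; rewrite ?vtxE.
  + split; first by move=> h; apply: Hnv; rewrite h.
    by move/Gen_lev => [_]; rewrite Hl; lia.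
  + split; first by apply: lev_neq; rewrite Lc Hlu; lia.
    move=> [_ [[Au [k'' Ek'']]|[Au _]]].
    * case: Hu => e' [He' Eu]. apply: (Hno e' He'). exists k''. by rewrite Eu -Ek''.
    * have : Al u = Al p by apply: Al_lev; rewrite Hlu Hl.
      by rewrite A (negbTE Au).
  + split; first by move=> h; apply: Hnv; rewrite h.
    by move/Gen_lev => [_]; rewrite Hl; lia.
-
  move=> nd1 r1 pre e post A Er E Hl HRP.
  have [ip0 [w0 [[a [b [Ea [Eb Hab]]]] [Hnv [Huq [Hnp [Hps Hlk]]]]]]] := RP_head HRP Hl.
  rewrite (negbTE A) in Hab. case: Hab => ? ?; subst a b.
  set p := vtx nd1 in A E Hl ip0 w0 Hnv Hlk *. set c := cb p One in E *.
  have Lc : lev c = n.+1 by rewrite /c lev_cb Hl.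
  have xc : x c = false by move: w0; rewrite /win1b (negbTE A) => /andP [/negPf].
  have He : List.In e r1 by rewrite Er; apply/List.in_app_iff; right; left.
  have Le : lev (vtx e) = n.
    have : lev (cb (vtx e) Two) = lev c by rewrite E.
    by rewrite lev_cb Lc => -[].
  have Ae : ~~ Al (vtx e) by rewrite (Al_lev (u := vtx e) (v := p)) ?Le.
  have [npe [ipe [_ we]]] := Hnp e He.
  have [a' [b' [Ea' [Eb' Hab']]]] := Hps e He Le. rewrite (negbTE Ae) in Hab'. case: Hab' => _ Hb'.
  subst b'.
  have Huq1 : Uq (pre ++ e :: post) by rewrite -Er.
  have [Hu1 Hu2] := Uq_mid Huq1 Le.
  have Hsub : forall u, V post u -> V r1 u.
    move=> u Hu; rewrite Er; apply/V_cat; right; apply/V_cons; by right.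
  split; first by exists (pre ++ [:: e]); rewrite Er -catA.
  split; first by exists (nd1 :: pre), e; rewrite Er.
  split.
    constructor; first exact: Hlk.
    constructor; first by exists ru; split => //; split => //; rewrite /= /EB Hl; split => //; split => //; split.
    constructor; first by exists rd; split => //; split => //; rewrite /= /EB Le; split => //; split => //; split.
    constructor.
  split.
    move=> nd' [<-|[<-|[<-|[]]]]; rewrite /NQ /nodeOK ?ninE ?noutE ?vtxE.
    + rewrite Ea Hl; split; last by []. split; [split; [by []| lfalse]|].
      split => //; split; [lia| lfalse].
    + rewrite Lc; split; last lia. split; [split; [lfalse| by []]|].
      split; [exact: ip_cb| split => //].
    + rewrite Eb' Le; split; last by []. split; [split; [by []| lfalse]|].
      split => //; split; [lia| lfalse].
  split.
    move=> nd' [<-|[<-|[<-|[]]]]; rewrite ?vtxE.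
    + left; split => //; apply/V_cons; by left.
    + right; split => //; exists p; split; first by apply/V_cons; left.
      split => //; right; split => //; by exists One.
    + left; split => //; apply/V_cons; right; exact: V_In He.
  split.
    apply: pw3.
    + apply: CR_lev; rewrite !vtxE Hl Lc; lia.
    + move=> _; by rewrite /ncls /= Ea Eb'.
    + apply: CR_lev; rewrite !vtxE Lc Le; lia.
  move=> nd' [<-|[<-|[<-|[]]]] u Hu Hlu; rewrite ?vtxE.
  + split; first by move=> h; apply: Hnv; rewrite h; exact: Hsub.
    by move/Gen_lev => [_]; rewrite Hl; lia.
  + split; first by apply: lev_neq; rewrite Lc Hlu; lia.
    move=> [_ [[Au _]|[Au [k'' Ek'']]]].
    * have : Al u = Al p by apply: Al_lev; rewrite Hlu Hl.
      by rewrite Au (negbTE A).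
    * case: k'' Ek'' => Ek''.
      -- have Eu : u = p by apply: (@cb_inj _ _ One); rewrite -Ek''.
         apply: Hnv; rewrite -Eu; exact: Hsub.
      -- have Eu : u = vtx e by apply: (@cb_inj _ _ Two); rewrite -Ek'' E.
         apply: Hu2; by rewrite -Eu.
  + split; first by move=> h; apply: Hu2; rewrite h.
    by move/Gen_lev => [_]; rewrite Le; lia.
-
  move=> nd1 r1 Z cont1 A Hno HZ Hl HRP.
  have [ip0 [w0 [psz [Hnv [Huq [Hnp [Hps Hlk]]]]]]] := RP_head HRP Hl.
  have [[s Es] [[pre [e [Ee [Zne Zl]]]] [Zch [ZNQ [Z5 [Zpw [Z7 Z8]]]]]]] :=
    Zig_props HZ Hl A ip0 w0 psz Hnv Huq Hnp Hps.
  have [a [b [Ea [Eb Hab]]]] := psz.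
  rewrite (negbTE A) in Hab. case: Hab => ? ?; subst a b.
  set p := vtx nd1 in A Hno Hl ip0 w0 Hnv Hlk Zch Z5 Z8 *. set c := cb p One in Hno *.
  have Lc : lev c = n.+1 by rewrite /c lev_cb Hl.
  have xc : x c = false by move: w0; rewrite /win1b (negbTE A) => /andP [/negPf].
  have Hsubc : forall u, V cont1 u -> V r1 u.
    move=> u Hu; rewrite Es; apply/V_cat; by right.
  have Zlev : forall nd', List.In nd' Z -> n <= lev (vtx nd').
    move=> nd' h; case: (Z5 nd' h) => [[-> _]|[-> _]] //.
  split; first by exists s.
  split.
    exists pre, e; split => //; split => //. rewrite /= (last_ne (Some ld, p, Some lu) nd1 Zne) Zl. by split.
  split.
    constructor; first exact: Hlk.
    constructor; first by exists ru; split => //; split => //; rewrite /= /EB Hl; split => //; split => //; split.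
    constructor; first by exists ld; split => //; split => //; rewrite /= /EB Hl; split => //; split => //; split.
    exact: Zch.
  split.
    move=> nd' [<-|[<-|[<-|H]]]; last by split; [exact: ZNQ| exact: Zlev].
    all: rewrite /NQ /nodeOK ?ninE ?noutE ?vtxE.
    + rewrite Ea Hl; split; last by []. split; [split; [by []| lfalse]|].
      split => //; split; [lia| lfalse].
    + rewrite Lc; split; last lia. split; [split; [lfalse| by []]|].
      split; [exact: ip_cb| split => //].
    + rewrite Hl; split; last by []. split; [split; [by []| lfalse]|].
      split => //; split; [lia| lfalse].
  split.
    move=> nd' [<-|[<-|[<-|H]]]; rewrite ?vtxE.
    + left; split => //; apply/V_cons; by left.
    + right; split => //; exists p; split; first by apply/V_cons; left.
      split => //; right; split => //; by exists One.
    + left; split => //; apply/V_cons; by left.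
    + case: (Z5 nd' H) => [[h1 h2]|[h1 [y [h2 h3]]]]; first by left.
      have Ly : lev y = n by move: h1; rewrite h3 lev_cb => -[].
      right; split => //; exists y; split.
        case: h2 => [->|h2]; apply/V_cons; by [left|right].
      split => //; right; split; last by exists Two.
      by rewrite (Al_lev (u := y) (v := p)) ?Ly.
  split.
    constructor.
      move=> b' [<-|[<-|H]].
      + apply: CR_lev; rewrite !vtxE Hl Lc; lia.
      + by move=> _; rewrite /ncls /= Ea.
      + move=> E'; rewrite vtxE in E'. by rewrite (Z8 b' H (esym E')) /ncls /= Ea.
    constructor.
      move=> b' [<-|H].
      + apply: CR_lev; rewrite !vtxE Hl Lc; lia.
      + move=> E'; exfalso; rewrite vtxE in E'.
        case: (Z5 b' H) => [[h1 _]|[h1 [y [h2 h3]]]]; first by move: h1; rewrite -E' Lc; lia.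
        rewrite -E' in h3. case: h2 => [h2|[e' [He' Ey]]].
        * apply: (@cb12 p); by rewrite -/c h3 h2.
        * apply: (Hno e' He'). by rewrite Ey -h3.
    constructor; last exact: Zpw.
    move=> b' H E'; rewrite vtxE in E'. by rewrite (Z8 b' H (esym E')).
  move=> nd' [<-|[<-|[<-|H]]] u Hu Hlu; rewrite ?vtxE; last exact: Z7.
  + split; first by move=> h; apply: Hnv; rewrite h; exact: Hsubc.
    by move/Gen_lev => [_]; rewrite Hl; lia.
  + split; first by apply: lev_neq; rewrite Lc Hlu; lia.
    move=> [_ [[Au _]|[Au [k'' Ek'']]]].
    * have : Al u = Al p by apply: Al_lev; rewrite Hlu Hl.
      by rewrite Au (negbTE A).
    * have [e' [He' Eu]] := Hsubc u Hu.
      case: k'' Ek'' => Ek''.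
      -- have Eu' : u = p by apply: (@cb_inj _ _ One); rewrite -Ek''.
         apply: Hnv; rewrite -Eu'; by exists e'.
      -- apply: (Hno e' He'); by rewrite Eu -Ek''.
  + split; first by move=> h; apply: Hnv; rewrite h; exact: Hsubc.
    by move/Gen_lev => [_]; rewrite Hl; lia.
Qed.

Lemma filter_allIn A (P : pred A) s : (forall a, List.In a s -> P a) -> filter P s = s.
Proof. elim: s => [|a s IH] //= H; rewrite H; [rewrite IH //; move=> b h; apply: H; by right| by left]. Qed.

Lemma filter_noneIn A (P : pred A) s : (forall a, List.In a s -> ~~ P a) -> filter P s = [::].
Proof. elim: s => [|a s IH] //= H; rewrite (negbTE (H a (or_introl erefl))) IH // => b h; apply: H; by right. Qed.

Definition Lo (nd : node) : bool := lev (vtx nd) < n.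
Definition Hi (nd : node) : bool := n <= lev (vtx nd).

Definition ProcOut (prev : node) (r W : seq node) : Prop :=
  chain (link n.+1) prev W /\
  (r <> [::] -> W <> [::] /\ forall d, last d W = last d r) /\
  (forall nd, List.In nd W -> NQ nd) /\
  Sub (filter Lo W) (filter Lo r) /\
  (forall nd, List.In nd W -> n <= lev (vtx nd) -> (lev (vtx nd) = n /\ V r (vtx nd)) \/
      (lev (vtx nd) = n.+1 /\ exists u, V r u /\ Gen u (vtx nd))) /\
  pw CR (filter Hi W).

Lemma Proc_props r W : Proc r W -> forall prev, RP prev r -> ProcOut prev r W.
Proof.
elim=> {r W} [|nd r W Hne HP IH|nd r g cont W Hl HG HP IH] prev HRP.
- split; first constructor. split => //. split => //. split; first constructor. split => //. constructor.
- have HRP' : RP nd r := @RP_suffix prev [::] nd r HRP.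
  have [ch [lst [NQs [Sb [G5 Pw]]]]] := IH nd HRP'.
  have [Hch [Hnp [Huq [Hps Hlast]]]] := HRP.
  have [np0 [ip0 [le0 _]]] := Hnp nd (or_introl erefl).
  have Hlt : lev (vtx nd) < n by rewrite ltn_neqAle Hne le0.
  split.
    constructor; last exact: ch.
    have : link n prev nd by inversion Hch.
    case=> t [h1 [h2 h3]]. exists t; split => //; split => //; exact: st_mono.
  split.
    move=> _; split => //. move=> d /=. case: r HP HRP' lst {IH Hps Hnp Hlast Huq Hch HRP Sb G5} => [|a r] HP HRP' lst.
      by inversion HP.
    have [_ ->] := lst ltac:(by []). by [].
  split.
    move=> nd' [<-|H]; last exact: NQs.
    split; last first.
      split => //; split; [exact: leqW| lfalse].
    move: np0; rewrite /nodeOK; case: (nin nd) => // a; case: (nout nd) => // b [h1 h2].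
    split; [move=> _; exact: h1| lfalse].
  split; first by rewrite /= /Lo Hlt; constructor.
  split.
    move=> nd' [<-|H] Hn; first by exfalso; move: Hn; rewrite leqNgt Hlt.
    case: (G5 nd' H Hn) => [[h1 h2]|[h1 [u [h2 h3]]]]; [left|right]; split => //.
    + apply/V_cons; by right.
    + exists u; split => //; apply/V_cons; by right.
  by rewrite /= /Hi leqNgt Hlt.
- have [[s Es] [[pre [e [Ee [gne [gvx gout]]]]] [gch [gNQ [g5 [gpw g7]]]]]] := Gad_props HG Hl HRP.
  have HRP' : RP e cont by apply: (@RP_suffix prev pre e cont); rewrite -Ee.
  have [ch [lst [NQs [Sb [G5 Pw]]]]] := IH e HRP'.
  have [Hch [Hnp [Huq [Hps Hlast]]]] := HRP.
  have gHi : forall a, List.In a g -> n <= lev (vtx a) by move=> a h; exact: (gNQ a h).2.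
  have Hlg : List.In (last nd g) g.
    case: g gne {gch gNQ g5 gpw g7 gHi HG gvx gout} => [|a g] // _. rewrite /=.
    elim: g a => [|b g IHg] a /=; [by left| right; exact: IHg].
  have Le : lev (vtx e) = n.
    have He : List.In e (nd :: r) by rewrite Ee; apply/List.in_app_iff; right; left.
    have [_ [_ [h _]]] := Hnp e He.
    case: (g5 _ Hlg) => [[h1 _]|[h1 _]]; rewrite gvx in h1 => //. by rewrite h1 in h; lia.
  have cne : cont <> [::].
    move=> E0. have := Hlast ltac:(by []). rewrite Ee E0 last_cat /= Le. lia.
  have [Wne Wl] := lst cne.
  split.
    apply/chain_cat; split => //. rewrite (last_ne prev nd gne).
    apply: chain_ext ch => b [t [h1 [h2 h3]]]. exists t; split; [by rewrite gout| split => //]. by rewrite gvx.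
  split.
    move=> _; split; first by case: g gne {gch gNQ g5 gpw g7 gHi HG gvx gout Hlg}.
    move=> d. rewrite last_cat (last_ne (last d g) e Wne) Wl Ee last_cat /=.
    exact: last_ne.
  split.
    move=> a /List.in_app_iff [h|h]; [exact: (gNQ a h).1| exact: NQs].
  split.
    rewrite filter_cat (filter_noneIn (P := Lo) (s := g)); last first.
      move=> a h; rewrite /Lo -leqNgt; exact: gHi.
    rewrite Ee -cat_rcons filter_cat /=. apply: Sub_catl. exact: Sb.
  split.
    move=> a /List.in_app_iff [h|h] Hn; first exact: g5.
    case: (G5 a h Hn) => [[h1 h2]|[h1 [u [h2 h3]]]]; [left|right]; split => //.
    + rewrite Ee; apply/V_cat; right; apply/V_cons; by right.
    + exists u; split => //. rewrite Ee; apply/V_cat; right; apply/V_cons; by right.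
  rewrite filter_cat (filter_allIn (P := Hi) (s := g)) //. apply: pw_cat => // a b Ha Hb E.
  exfalso. move/In_filter: Hb => [Hb Hib].
  case: (G5 b Hb Hib) => [[h1 h2]|[h1 [u [h2 h3]]]].
  - have [h _] := g7 a Ha (vtx b) h2 h1. by apply: h.
  - have [Lu _] := Gen_lev h3. have [_ h] := g7 a Ha u h2 Lu. apply: h. by rewrite E.
Qed.
End Step.
Lemma Sub_filter_self A (P : pred A) s : Sub (filter P s) s.
Proof. elim: s => [|a s IH] /=; [constructor| case: (P a); by constructor]. Qed.

Lemma peak_shape n nd c c' : link n c nd -> link n nd c' -> lev (vtx nd) = n -> nodeOK n nd ->
  PeakShape nd.
Proof.
move=> [a [_ [Ea Hsa]]] [b [Eb [_ Hsb]]] Hl.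
rewrite /nodeOK Ea Eb => -[_ /(_ Hl) Hbd].
have [_ [_ [lc _]]] := st_info Hsa. have [_ [_ [_ lc']]] := st_info Hsb.
have La := st_lev Hsa. have Lb := st_lev Hsb.
exists a, b; split => //; split => //.
have Hadn : is_up a.
  move: La; case: (is_up a) => // h. by move: lc; rewrite h Hl; lia.
have Hbdn : ~~ is_up b.
  move: Lb; case: (is_up b) => // h. by move: lc'; rewrite h Hl; lia.
case: a Hsa Hadn Hbd La {Ea} => //= Hsa _ Hbd La.
-
  have Ac : Al (vtx c) by case: Hsa => _ [_ [h _]].
  rewrite (Al_succ La) Ac /=. by case: b Hbd Hbdn {Hsb Lb Eb}.
-
  have Ac : ~~ Al (vtx c) by case: Hsa => _ [_ [h _]].
  rewrite (Al_succ La) Ac /=. split; first by right. by case: b Hbd Hbdn {Hsb Lb Eb} => //= _ _; by [left|right].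
-
  have Ac : ~~ Al (vtx c) by case: Hsa => _ [_ [h _]].
  rewrite (Al_succ La) Ac /=. split; first by left. by case: b Hbd Hbdn {Hsb Lb Eb} => //= _ _; by [left|right].
Qed.

Lemma peak_cls nd : PeakShape nd -> ncls nd = 3.
Proof.
move=> [a [b [Ea [Eb H]]]]; rewrite /ncls Ea Eb.
case: (Al (vtx nd)) H => [[[->|->] [->|->]]|[-> ->]] //.
Qed.

Lemma step_valid n x C : 0 < n -> Valid n (xs x) C -> exists W, Valid n.+1 x W.
Proof.
move=> hn [t0 [C' [EC [Ht0 [Hch [[tl [Hlast Htl]] [Hall Hpw]]]]]]].
set n0 := n0of t0 in EC Hch Hlast *.
have HIn : forall nd, List.In nd C' -> List.In nd C by move=> nd h; rewrite EC; right.
have Hlastlev : lev (vtx (last n0 C')) = 0 by rewrite Hlast vtxE lev_root.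
have Cne : C' <> [::] by move=> E; rewrite E in Hlast.
have HPS : forall nd, List.In nd C' -> lev (vtx nd) = n -> PeakShape nd.
  move=> nd h Hl. have [c Hc] := chain_prev Hch h.
  have Hnl : nd <> last n0 C' by move=> E; move: Hlastlev; rewrite -E Hl; lia.
  have [c' Hc'] := chain_next Hch h Hnl.
  exact: peak_shape Hc Hc' Hl (Hall nd (HIn nd h)).1.
have HpwC' : pw CR C' by rewrite EC in Hpw; inversion Hpw.
have HRP : RP n x n0 C'.
  split => //. split.
    move=> nd h; have [h1 [h2 [h3 h4]]] := Hall nd (HIn nd h).
    split => //; split => //; split => // Hl. by apply/negbFE; apply: h4.
  split.
    move=> s1 nd s2 E Hl [nd' [Hin' Ev]].
    have Hnd : List.In nd C' by rewrite E; apply/List.in_app_iff; right; left.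
    have Hnd' : List.In nd' C'.
      rewrite E; apply/List.in_app_iff; case/List.in_app_iff: Hin' => h; by [left| right; right].
    have c1 := peak_cls (HPS nd Hnd Hl).
    have c2 := peak_cls (HPS nd' Hnd' ltac:(by rewrite Ev)).
    move: HpwC'; rewrite E => /pw_catE [_ [H2 H3]].
    case/List.in_app_iff: Hin' => h.
    + have := H3 nd' nd h (or_introl erefl) Ev. by rewrite c1 c2.
    + inversion H2; subst. have := H1 nd' h (esym Ev). by rewrite c1 c2.
  split; first exact: HPS.
  move=> _; rewrite Hlastlev //.
have [W HW] : exists W, Proc n x C' W.
  apply: (Proc_ex hn) => nd h; have [_ [_ [h3 h4]]] := Hall nd (HIn nd h).
  split => // Hl. by apply/negbFE; apply: h4.
have [ch [lst [NQs [Sb [_ Pw]]]]] := Proc_props hn HW HRP.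
have [Wne Wl] := lst Cne.
exists (n0 :: W), t0, W; split => //; split => //; split => //.
split; first by exists tl; rewrite Wl.
split.
  move=> nd [<-|h]; last exact: NQs.
  rewrite /n0 /n0of /nodeOK /= lev_root; split => //; split; first exact: ip_root. split => //.
apply: (@pw_split _ _ (Lo n)).
- move=> a b Ha Hb; split; apply: CR_lev; move: Ha Hb; rewrite /Lo; lia.
- have Hn0 : Lo n n0 by rewrite /Lo /n0 /n0of vtxE lev_root.
  rewrite /= Hn0. apply: (pw_Sub (t := filter (Lo n) C)); last first.
    apply: pw_Sub Hpw. exact: Sub_filter_self.
  rewrite EC /= Hn0. by constructor.
- have Hn0 : Lo n n0 by rewrite /Lo /n0 /n0of vtxE lev_root.
  rewrite /= Hn0 /=. have -> : filter (predC (Lo n)) W = filter (Hi n) W.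
    apply: eq_filter => nd; by rewrite /Lo /Hi /= -leqNgt.
  exact: Pw.
Qed.


Lemma base_valid x : wins x 1 root -> exists W, Valid 1 x W.
Proof.
have Lr := lev_root.
rewrite /=. case A: (Al root).
- move=> [k xk]. set c := ca root k.
  have Lc : lev c = 1 by rewrite /c lev_ca Lr.
  exists [:: n0of su; (Some su, c, Some sd); (Some sd, root, None)], su, [:: (Some su, c, Some sd); (Some sd, root, None)].
  split => //; split; first by left.
  split.
    constructor; first by exists su; split => //; split => //; rewrite /= /EA Lr; split; [exact: ip_root| split => //; split => //; by exists k].
    constructor; first by exists sd; split => //; split => //; rewrite /= /EA Lr; split; [exact: ip_root| split => //; split => //; by exists k].
    constructor.
  split; first by exists sd; split => //; left.
  split.
    move=> nd [<-|[<-|[<-|[]]]]; rewrite /nodeOK ?ninE ?noutE ?vtxE ?Lr ?Lc.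
    + split => //; split; [exact: ip_root| by []].
    + split; first by split => //. split; [apply: ip_ca; [exact: ip_root| by rewrite A]| split => // _; exact: xk].
    + split => //; split; [exact: ip_root| by []].
  constructor.
    move=> b [<-|[<-|[]]].
    + apply: CR_lev; by rewrite !vtxE Lr Lc.
    + by move=> _.
  constructor; last by constructor; [move=> ? []| constructor].
  move=> b [<-|[]]. apply: CR_lev; by rewrite !vtxE Lr Lc.
- move=> Hk. set c1 := cb root One. set c2 := cb root Two.
  have L1 : lev c1 = 1 by rewrite /c1 lev_cb Lr.
  have L2 : lev c2 = 1 by rewrite /c2 lev_cb Lr.
  have nA : ~~ Al root by rewrite A.
  exists [:: n0of ru; (Some ru, c1, Some ld); (Some ld, root, Some lu); (Some lu, c2, Some rd); (Some rd, root, None)], ru,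
    [:: (Some ru, c1, Some ld); (Some ld, root, Some lu); (Some lu, c2, Some rd); (Some rd, root, None)].
  split => //; split; first by right.
  split.
    constructor; first by exists ru; split => //; split => //; rewrite /= /EB Lr; split; [exact: ip_root| split => //].
    constructor; first by exists ld; split => //; split => //; rewrite /= /EB Lr; split; [exact: ip_root| split => //].
    constructor; first by exists lu; split => //; split => //; rewrite /= /EB Lr; split; [exact: ip_root| split => //].
    constructor; first by exists rd; split => //; split => //; rewrite /= /EB Lr; split; [exact: ip_root| split => //].
    constructor.
  split; first by exists rd; split => //; right.
  split.
    move=> nd [<-|[<-|[<-|[<-|[<-|[]]]]]]; rewrite /nodeOK ?ninE ?noutE ?vtxE ?Lr ?L1 ?L2.
    + split => //; split; [exact: ip_root| by []].
    + split; first by split => //. split; [apply: ip_cb; [exact: ip_root| exact: nA]| by split => // _; apply: Hk].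
    + split => //; split; [exact: ip_root| by []].
    + split; first by split => //. split; [apply: ip_cb; [exact: ip_root| exact: nA]| by split => // _; apply: Hk].
    + split => //; split; [exact: ip_root| by []].
  have Hr : forall a b : node, lev (vtx a) <> lev (vtx b) -> CR a b := @CR_lev.
  constructor.
    move=> b [<-|[<-|[<-|[<-|[]]]]]; try (apply: Hr; rewrite !vtxE ?Lr ?L1 ?L2; lia); by move=> _.
  constructor.
    move=> b [<-|[<-|[<-|[]]]]; try (apply: Hr; rewrite !vtxE ?Lr ?L1 ?L2; lia).
    rewrite /CR !vtxE => E; exfalso; exact: cb12 E.
  constructor.
    move=> b [<-|[<-|[]]]; try (apply: Hr; rewrite !vtxE ?Lr ?L1 ?L2; lia). by move=> _.
  constructor.
    move=> b [<-|[]]; apply: Hr; rewrite !vtxE ?Lr ?L1 ?L2; lia.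
  constructor; [by move=> ? []| constructor].
Qed.

Lemma main_valid n : 0 < n -> forall x, wins x n root -> exists W, Valid n x W.
Proof.
elim: n => [|n IH] // _ x.
case: n IH => [|n] IH; first exact: base_valid.
move/wins_shift => H. have [C HC] := IH isT (xs x) H.
exact: step_valid HC.
Qed.

Theorem generic n x : 0 < n -> @alice_wins (G n) x -> @toom_present (G n) x.
Proof.
move=> hn /alice_wins_wins H. have [W HW] := main_valid hn H. exact: Valid_toom HW.
Qed.

End Main.

Lemma tree_len (a : seq dir) k : size (rcons a k) = (size a).+1.
Proof. exact: size_rcons. Qed.

Theorem theorem10 (n : nat) (G : gspec) (hn : 1 <= n)
  (hG : G = game_G n Tree N2 Ltimes \/ G = game_G' n Tree N2 Rtimes \/
        G = game_G n N2 N2 Ltimes \/ G = game_G' n N2 N2 Rtimes)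
  (x : gvert G -> bool) :
  alice_wins x -> toom_present x.
Proof.
have hT1 : forall (a : dvert Tree) k, @dlen Tree (@dchild Tree a k) = (@dlen Tree a).+1.
  move=> a k; exact: size_rcons.
have hT2 : forall (a a' : dvert Tree) k, @dchild Tree a k = @dchild Tree a' k -> a = a'.
  move=> a a' k; exact: rcons_injl.
have hT3 : @dlen Tree (droot Tree) = 0 by [].
have hN1 : forall (a : dvert N2) k, @dlen N2 (@dchild N2 a k) = (@dlen N2 a).+1.
  move=> [i j] [] /=; lia.
have hN2 : forall (a a' : dvert N2) k, @dchild N2 a k = @dchild N2 a' k -> a = a'.
  move=> [i j] [i' j'] [] /= [-> ->] //.
have hN3 : @dlen N2 (droot N2) = 0 by [].
case: hG => [->|[->|[->|->]]] in x *.
- exact: (@generic Tree hT1 hT2 hT3 Ltimes false (or_introl (conj erefl erefl)) n x hn).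
- exact: (@generic Tree hT1 hT2 hT3 Rtimes true (or_intror (conj erefl erefl)) n x hn).
- exact: (@generic N2 hN1 hN2 hN3 Ltimes false (or_introl (conj erefl erefl)) n x hn).
- exact: (@generic N2 hN1 hN2 hN3 Rtimes true (or_intror (conj erefl erefl)) n x hn).
Qed.
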